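(* For every computable endofunctor $d$ and every represented space $\mathbf{X}$, $\mathcal{O}^d(\mathbf{X})=\mathcal{O}^{\kappa^d}(\mathbf{X})$, i.e. $\mathcal{C}(\mathbf{X},d\mathbb{S})$ and $\mathcal{C}(\mathbf{X},\kappa^d\mathbb{S})$ are computably isomorphic via composition with $\kappa^d:d\mathbb{S}\to\kappa^d\mathbb{S}$.
   Context: Represented spaces $(X,\delta_X)$ with $\delta_X:\subseteq\{0,1\}^\mathbb{N}\to X$ partial surjective; computable/continuous maps via realizers; $\mathcal{C}(\mathbf{X},\mathbf{Y})$ the represented space of continuous maps. $\mathbb{S}=(\{\bot,\top\},\delta_\mathbb{S})$, $\delta_\mathbb{S}(0^\mathbb{N})=\bot$, $\delta_\mathbb{S}(p)=\top$ otherwise; $\mathcal{O}(\mathbf{Y})=\mathcal{C}(\mathbf{Y},\mathbb{S})$. A computable endofunctor is an endofunctor $d$ on represented spaces with continuous maps such that each $f\mapsto df$ is computable; $\mathcal{O}^d(\mathbf{X}):=\mathcal{C}(\mathbf{X},d\mathbb{S})$. $\kappa^d:d\mathbf{Y}\to\mathcal{C}(\mathcal{O}(\mathbf{Y}),d\mathbb{S})$, $\kappa^d(y)(U)=(dU)(y)$; $\kappa^d$ also denotes the computable endofunctor sending $\mathbf{Y}$ to the image $\kappa^d\mathbf{Y}$ of this map and a continuous $f:\mathbf{Y}\to\mathbf{Z}$ to $\varphi\mapsto(V\mapsto\varphi(V\circ f))$. *)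

(* Defs.v *)
From Stdlib Require Import Arith Lia List FunctionalExtensionality ProofIrrelevance.
Import ListNotations.
Set Implicit Arguments.

Inductive code : Type :=
| cZero : code
| cSucc : code
| cProj : nat -> code
| cComp : code -> list code -> code
| cPrim : code -> code -> code
| cMu   : code -> code.

Inductive eval : code -> list nat -> nat -> Prop :=
| eZero v : eval cZero v 0
| eSucc x v : eval cSucc (x :: v) (S x)
| eProj i v : i < length v -> eval (cProj i) v (nth i v 0)
| eComp f gs v ws y : evals gs v ws -> eval f ws y -> eval (cComp f gs) v y
| ePrim0 f g v y : eval f v y -> eval (cPrim f g) (0 :: v) y
| ePrimS f g n v r y :
    eval (cPrim f g) (n :: v) r -> eval g (n :: r :: v) y ->
    eval (cPrim f g) (S n :: v) y
| eMu f v n : eval f (n :: v) 0 ->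
    (forall m, m < n -> exists k, eval f (m :: v) (S k)) ->
    eval (cMu f) v n
with evals : list code -> list nat -> list nat -> Prop :=
| esNil v : evals [] v []
| esCons g gs v w ws : eval g v w -> evals gs v ws -> evals (g :: gs) v (w :: ws).

Definition computable_seq (p : nat -> bool) : Prop :=
  exists e : code, forall n, eval e [n] (if p n then 1 else 0).

Definition cpair (a b : nat) : nat := (a + b) * S (a + b) / 2 + b.
Fixpoint lcode (l : list bool) : nat :=
  match l with [] => 0 | b :: l' => S (cpair (if b then 1 else 0) (lcode l')) end.
Definition qcode (n : nat) (l : list bool) (b : bool) : nat :=
  cpair n (cpair (lcode l) (if b then 1 else 0)).

Definition prefix (q : nat -> bool) (k : nat) : list bool := map q (seq 0 k).

Definition fires (p : nat -> bool) (n : nat) (q : nat -> bool) (k : nat) : bool :=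
  p (qcode n (prefix q k) true) || p (qcode n (prefix q k) false).

(* F_p(q) = r : for each n, look for the least k such that p answers on
   (n, q|k); the answer bit is the n-th output bit. *)
Definition assoc_app (p q r : nat -> bool) : Prop :=
  forall n, exists k, fires p n q k = true /\
    (forall k', k' < k -> fires p n q k' = false) /\
    r n = p (qcode n (prefix q k) true).

Lemma assoc_app_det p q r r' : assoc_app p q r -> assoc_app p q r' -> r = r'.
Proof.
  intros H H'. apply functional_extensionality. intro n.
  destruct (H n) as [k [Hk [Hmin Hr]]]. destruct (H' n) as [k' [Hk' [Hmin' Hr']]].
  destruct (Nat.lt_trichotomy k k') as [Hlt|[Heq|Hlt]].
  - rewrite (Hmin' _ Hlt) in Hk. discriminate.
  - subst. congruence.
  - rewrite (Hmin _ Hlt) in Hk'. discriminate.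
Qed.

Record RepSpace : Type := {
  carrier :> Type;
  rep : (nat -> bool) -> carrier -> Prop;        (* rep p x  <->  delta(p) = x *)
  rep_fun : forall p x y, rep p x -> rep p y -> x = y;
  rep_surj : forall x, exists p, rep p x
}.

Definition realizes (X Y : RepSpace) (p : nat -> bool) (f : X -> Y) : Prop :=
  forall q x, rep X q x -> exists r, assoc_app p q r /\ rep Y r (f x).
Arguments realizes : clear implicits.

Definition continuous (X Y : RepSpace) (f : X -> Y) : Prop :=
  exists p, realizes X Y p f.

Definition computable (X Y : RepSpace) (f : X -> Y) : Prop :=
  exists p, computable_seq p /\ realizes X Y p f.

Definition cont (X Y : RepSpace) : Type := { f : X -> Y | continuous X Y f }.

(* the represented space C(X,Y) of continuous maps: names are associates *)
Lemma Cspace_fun (X Y : RepSpace) (p : nat -> bool) (f g : cont X Y) :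
  realizes X Y p (proj1_sig f) -> realizes X Y p (proj1_sig g) -> f = g.
Proof.
  intros Hf Hg. destruct f as [f cf], g as [g cg]; simpl in *.
  assert (E : f = g).
  { apply functional_extensionality. intro x.
    destruct (rep_surj X x) as [q Hq].
    destruct (Hf q x Hq) as [r [Hr Hrf]]. destruct (Hg q x Hq) as [r' [Hr' Hrg]].
    rewrite (assoc_app_det Hr Hr') in Hrf. exact (rep_fun Y _ _ _ Hrf Hrg). }
  subst g. f_equal. apply proof_irrelevance.
Qed.

Lemma Cspace_surj (X Y : RepSpace) (f : cont X Y) :
  exists p, realizes X Y p (proj1_sig f).
Proof. destruct f as [f [p Hp]]. exists p. exact Hp. Qed.

Definition Cspace (X Y : RepSpace) : RepSpace :=
  {| carrier := cont X Y;
     rep := fun p f => realizes X Y p (proj1_sig f);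
     rep_fun := @Cspace_fun X Y;
     rep_surj := @Cspace_surj X Y |}.

(* Sierpinski space: false = bottom, true = top; delta(0^N) = bottom *)
Definition sier_rep (p : nat -> bool) (b : bool) : Prop :=
  b = true <-> exists n, p n = true.

Lemma sier_fun p x y : sier_rep p x -> sier_rep p y -> x = y.
Proof.
  unfold sier_rep; intros Hx Hy.
  destruct x, y; try reflexivity.
  - exfalso. assert (true = true) as T by reflexivity.
    apply Hx in T. apply Hy in T. discriminate.
  - exfalso. assert (true = true) as T by reflexivity.
    apply Hy in T. apply Hx in T. discriminate.
Qed.

Lemma sier_surj x : exists p, sier_rep p x.
Proof.
  destruct x.
  - exists (fun _ => true). unfold sier_rep; split; intros; [exists 0|]; reflexivity.
  - exists (fun _ => false). unfold sier_rep; split.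
    + discriminate.
    + intros [n Hn]; discriminate.
Qed.

Definition Sier : RepSpace :=
  {| carrier := bool; rep := sier_rep; rep_fun := sier_fun; rep_surj := sier_surj |}.

Definition Ospace (Y : RepSpace) : RepSpace := Cspace Y Sier.

Lemma sub_fun (Z : RepSpace) (P : Z -> Prop) p (x y : {z : Z | P z}) :
  rep Z p (proj1_sig x) -> rep Z p (proj1_sig y) -> x = y.
Proof.
  intros Hx Hy. destruct x as [x px], y as [y py]; simpl in *.
  pose proof (rep_fun Z _ _ _ Hx Hy). subst y. f_equal. apply proof_irrelevance.
Qed.

Lemma sub_surj (Z : RepSpace) (P : Z -> Prop) (x : {z : Z | P z}) :
  exists p, rep Z p (proj1_sig x).
Proof. apply rep_surj. Qed.

Definition subspace (Z : RepSpace) (P : Z -> Prop) : RepSpace :=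
  {| carrier := {z : Z | P z};
     rep := fun p z => rep Z p (proj1_sig z);
     rep_fun := @sub_fun Z P;
     rep_surj := @sub_surj Z P |}.

Record CompEndofunctor : Type := {
  dobj : RepSpace -> RepSpace;
  dmap : forall X Y : RepSpace, cont X Y -> cont (dobj X) (dobj Y);
  dmap_id : forall (X : RepSpace) (i : cont X X),
      (forall x, proj1_sig i x = x) ->
      forall y, proj1_sig (dmap i) y = y;
  dmap_comp : forall (X Y Z : RepSpace) (f : cont X Y) (g : cont Y Z) (h : cont X Z),
      (forall x, proj1_sig h x = proj1_sig g (proj1_sig f x)) ->
      forall y, proj1_sig (dmap h) y = proj1_sig (dmap g) (proj1_sig (dmap f) y);
  dmap_computable : forall X Y : RepSpace,
      computable (Cspace X Y) (Cspace (dobj X) (dobj Y)) (@dmap X Y)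
}.

Definition Od (d : CompEndofunctor) (X : RepSpace) : RepSpace :=
  Cspace X (dobj d Sier).

(* kappa^d Y: the image of  y |-> (U |-> (dU)(y))  in C(O(Y), dS),
   as a subspace of C(O(Y), dS). *)
Definition kappa_obj (d : CompEndofunctor) (Y : RepSpace) : RepSpace :=
  @subspace (Cspace (Ospace Y) (dobj d Sier)) (fun phi : Cspace (Ospace Y) (dobj d Sier) =>
    exists y : dobj d Y,
      forall U : Ospace Y, proj1_sig phi U = proj1_sig (dmap d U) y).

(* Main.v *)
Require Import Defs.
From Stdlib Require Import Arith Lia List Bool FunctionalExtensionality ProofIrrelevance.
Import ListNotations.

Import ListNotations.

Definition R (n : nat) (f : list nat -> nat) : Prop :=
  exists c, forall v, length v = n -> eval c v (f v).
Definition Rs (n : nat) (fs : list (list nat -> nat)) : Prop :=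
  exists cs, forall v, length v = n -> evals cs v (map (fun f => f v) fs).

Lemma R_ext n f g : R n f -> (forall v, length v = n -> f v = g v) -> R n g.
Proof. intros [c H] E. exists c. intros v Hv. rewrite <- E by exact Hv. auto. Qed.

Lemma R_zero n : R n (fun _ => 0).
Proof. exists cZero. intros. constructor. Qed.

Lemma R_succ : R 1 (fun v => S (nth 0 v 0)).
Proof. exists cSucc. intros [|x [|]] H; simpl in H; try discriminate. constructor. Qed.

Lemma R_proj n i : i < n -> R n (fun v => nth i v 0).
Proof. intros Hi. exists (cProj i). intros v Hv. constructor. lia. Qed.

Lemma Rs_nil n : Rs n [].
Proof. exists []. intros. constructor. Qed.

Lemma Rs_cons n f fs : R n f -> Rs n fs -> Rs n (f :: fs).
Proof. intros [c H] [cs Hs]. exists (c :: cs). intros v Hv. simpl. constructor; auto. Qed.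

Lemma R_comp n f gs : R (length gs) f -> Rs n gs ->
  R n (fun v => f (map (fun g => g v) gs)).
Proof.
  intros [c H] [cs Hs]. exists (cComp c cs). intros v Hv.
  econstructor. apply Hs; auto. apply H. rewrite length_map; auto.
Qed.

Fixpoint prec (B : list nat -> nat) (St : nat -> nat -> list nat -> nat) (x : nat) (v : list nat) : nat :=
  match x with 0 => B v | S x' => St x' (prec B St x' v) v end.

Lemma R_prim n B St : R n B ->
  R (S (S n)) (fun v => St (nth 0 v 0) (nth 1 v 0) (skipn 2 v)) ->
  R (S n) (fun v => prec B St (nth 0 v 0) (skipn 1 v)).
Proof.
  intros [b Hb] [s Hs]. exists (cPrim b s). intros [|x v] Hv; simpl in Hv; try discriminate.
  injection Hv as Hv. simpl. induction x.
  - simpl. constructor. auto.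
  - simpl. econstructor. exact IHx.
    specialize (Hs (x :: prec B St x v :: v)). simpl in Hs. apply Hs. lia.
Qed.

Lemma R_c1 n f g1 : R 1 (fun w => f (nth 0 w 0)) -> R n g1 -> R n (fun v => f (g1 v)).
Proof.
  intros Hf H1. eapply R_ext. apply (R_comp n (fun w => f (nth 0 w 0)) [g1]). exact Hf.
  apply Rs_cons; auto. apply Rs_nil. intros; reflexivity.
Qed.
Lemma R_c2 n f g1 g2 : R 2 (fun w => f (nth 0 w 0) (nth 1 w 0)) -> R n g1 -> R n g2 ->
  R n (fun v => f (g1 v) (g2 v)).
Proof.
  intros Hf H1 H2. eapply R_ext. apply (R_comp n (fun w => f (nth 0 w 0) (nth 1 w 0)) [g1;g2]). exact Hf.
  repeat apply Rs_cons; auto. apply Rs_nil. intros; reflexivity.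
Qed.
Lemma R_c3 n f g1 g2 g3 : R 3 (fun w => f (nth 0 w 0) (nth 1 w 0) (nth 2 w 0)) ->
  R n g1 -> R n g2 -> R n g3 -> R n (fun v => f (g1 v) (g2 v) (g3 v)).
Proof.
  intros Hf H1 H2 H3. eapply R_ext. apply (R_comp n (fun w => f (nth 0 w 0) (nth 1 w 0) (nth 2 w 0)) [g1;g2;g3]). exact Hf.
  repeat apply Rs_cons; auto. apply Rs_nil. intros; reflexivity.
Qed.
Lemma R_c4 n f g1 g2 g3 g4 : R 4 (fun w => f (nth 0 w 0) (nth 1 w 0) (nth 2 w 0) (nth 3 w 0)) ->
  R n g1 -> R n g2 -> R n g3 -> R n g4 -> R n (fun v => f (g1 v) (g2 v) (g3 v) (g4 v)).
Proof.
  intros Hf H1 H2 H3 H4. eapply R_ext. apply (R_comp n (fun w => f (nth 0 w 0) (nth 1 w 0) (nth 2 w 0) (nth 3 w 0)) [g1;g2;g3;g4]). exact Hf.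
  repeat apply Rs_cons; auto. apply Rs_nil. intros; reflexivity.
Qed.

Lemma R_const n k : R n (fun _ => k).
Proof.
  induction k. apply R_zero.
  apply (R_c1 n S (fun _ => k)). apply R_succ. auto.
Qed.

Fixpoint nrec (b : nat) (st : nat -> nat -> nat) (x : nat) : nat :=
  match x with 0 => b | S x' => st x' (nrec b st x') end.

Lemma R_nrec n (X : list nat -> nat) (B : list nat -> nat) (St : nat -> nat -> list nat -> nat) :
  R n X -> R n B ->
  R (S (S n)) (fun v => St (nth 0 v 0) (nth 1 v 0) (skipn 2 v)) ->
  R n (fun v => nrec (B v) (fun i a => St i a v) (X v)).
Proof.
  intros HX HB HS.
  assert (HP := R_prim n B St HB HS).
  set (gs := X :: map (fun i => fun v : list nat => nth i v 0) (seq 0 n)).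
  assert (Hgs : Rs n gs).
  { unfold gs. apply Rs_cons; auto. clear. 
    assert (forall k, k <= n -> Rs n (map (fun i => fun v : list nat => nth i v 0) (seq (n - k) k))).
    { induction k; intros. apply Rs_nil. replace (n - S k) with (n - S k) by lia.
      simpl. apply Rs_cons. apply R_proj. lia. replace (S (n - S k)) with (n - k) by lia. apply IHk. lia. }
    specialize (H n). rewrite Nat.sub_diag in H. auto. }
  assert (HL : length gs = S n) by (unfold gs; simpl; rewrite length_map, length_seq; auto).
  rewrite <- HL in HP.
  eapply R_ext. apply (R_comp n (fun v => prec B St (nth 0 v 0) (skipn 1 v)) gs); eauto.
  intros v Hv. unfold gs. simpl.
  assert (E : map (fun g => g v) (map (fun i (v0 : list nat) => nth i v0 0) (seq 0 n)) = v).
  { rewrite map_map. rewrite <- Hv. clear. induction v; simpl; auto. f_equal.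
    rewrite <- seq_shift, map_map. simpl. exact IHv. }
  rewrite E. clear E.
  generalize (X v). intro x. induction x; simpl; auto. rewrite IHx. reflexivity.
Qed.

Import ListNotations.

Lemma Rs_skip k n : Rs (k + n) (map (fun i (v : list nat) => nth (k + i) v 0) (seq 0 n)).
Proof.
  assert (forall j, j <= n -> Rs (k + n) (map (fun i (v : list nat) => nth (k + i) v 0) (seq (n - j) j))).
  { induction j; intros. apply Rs_nil. simpl. apply Rs_cons. apply R_proj. lia.
    replace (S (n - S j)) with (n - j) by lia. apply IHj. lia. }
  specialize (H n (le_n _)). rewrite Nat.sub_diag in H. exact H.
Qed.

Lemma map_skip k n (w : list nat) : length w = k + n ->
  map (fun g => g w) (map (fun i (v : list nat) => nth (k + i) v 0) (seq 0 n)) = skipn k w.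
Proof.
  intros Hw. rewrite map_map.
  assert (E : forall u : list nat, map (fun i => nth i u 0) (seq 0 (length u)) = u).
  { induction u; simpl; auto. f_equal. rewrite <- seq_shift, map_map. simpl. exact IHu. }
  rewrite <- (E (skipn k w)). rewrite length_skipn. replace (length w - k) with n by lia.
  apply map_ext_in. intros i Hi. rewrite nth_skipn. f_equal; lia.
Qed.

Lemma R_cons_env k n F G : R (S n) F -> R (k + n) G -> R (k + n) (fun w => F (G w :: skipn k w)).
Proof.
  intros HF HG.
  assert (HL : length (G :: map (fun i (v : list nat) => nth (k + i) v 0) (seq 0 n)) = S n)
    by (simpl; rewrite length_map, length_seq; auto).
  rewrite <- HL in HF.
  eapply R_ext. apply (R_comp (k + n) F (G :: map (fun i (v : list nat) => nth (k + i) v 0) (seq 0 n))); auto.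
  apply Rs_cons; auto. apply Rs_skip.
  intros w Hw. simpl. rewrite map_skip; auto.
Qed.

Lemma R_lift k n F : R n F -> R (k + n) (fun w => F (skipn k w)).
Proof.
  intros HF.
  assert (HL : length (map (fun i (v : list nat) => nth (k + i) v 0) (seq 0 n)) = n)
    by (rewrite length_map, length_seq; auto).
  rewrite <- HL in HF.
  eapply R_ext. apply (R_comp (k + n) F (map (fun i (v : list nat) => nth (k + i) v 0) (seq 0 n))); auto. apply Rs_skip.
  intros w Hw. simpl. rewrite map_skip; auto.
Qed.

Definition addn' x y := nrec x (fun _ a => S a) y.
Lemma addn'_ok x y : addn' x y = x + y.
Proof. unfold addn'. induction y; simpl; lia. Qed.

Ltac Rp i := eapply R_ext; [apply (R_proj _ i); lia | intros ? ?; rewrite ?nth_skipn; reflexivity].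

Lemma R_add : R 2 (fun w => nth 0 w 0 + nth 1 w 0).
Proof.
  eapply R_ext. apply (R_nrec 2 (fun v => nth 1 v 0) (fun v => nth 0 v 0) (fun _ a _ => S a)).
  Rp 1. Rp 0. apply (R_c1 4 S). apply R_succ. Rp 1.
  intros; simpl. fold (addn' (nth 0 v 0) (nth 1 v 0)). apply addn'_ok.
Qed.

Lemma R_mul : R 2 (fun w => nth 0 w 0 * nth 1 w 0).
Proof.
  eapply R_ext. apply (R_nrec 2 (fun v => nth 1 v 0) (fun v => 0) (fun _ a v => a + nth 0 v 0)).
  Rp 1. apply R_zero. apply (R_c2 4 Nat.add). apply R_add. Rp 1. Rp 2.
  intros; simpl. generalize (nth 1 v 0). induction n; simpl; lia.
Qed.

Lemma R_pred : R 1 (fun w => pred (nth 0 w 0)).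
Proof.
  eapply R_ext. apply (R_nrec 1 (fun v => nth 0 v 0) (fun v => 0) (fun i _ _ => i)).
  Rp 0. apply R_zero. Rp 0.
  intros; simpl. destruct (nth 0 v 0); reflexivity.
Qed.

Lemma R_sub : R 2 (fun w => nth 0 w 0 - nth 1 w 0).
Proof.
  eapply R_ext. apply (R_nrec 2 (fun v => nth 1 v 0) (fun v => nth 0 v 0) (fun _ a _ => pred a)).
  Rp 1. Rp 0. apply (R_c1 4 pred). apply R_pred. Rp 1.
  intros; simpl. generalize (nth 1 v 0). induction n; simpl; lia.
Qed.

Definition ifz (c a b : nat) := match c with 0 => a | _ => b end.
Lemma R_ifz : R 3 (fun w => ifz (nth 0 w 0) (nth 1 w 0) (nth 2 w 0)).
Proof.
  eapply R_ext. apply (R_nrec 3 (fun v => nth 0 v 0) (fun v => nth 1 v 0) (fun _ _ v => nth 2 v 0)).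
  Rp 0. Rp 1. Rp 4.
  intros; simpl. destruct (nth 0 v 0); reflexivity.
Qed.

Lemma R_addf n f g : R n f -> R n g -> R n (fun v => f v + g v).
Proof. intros. apply (R_c2 n Nat.add); auto. apply R_add. Qed.
Lemma R_mulf n f g : R n f -> R n g -> R n (fun v => f v * g v).
Proof. intros. apply (R_c2 n Nat.mul); auto. apply R_mul. Qed.
Lemma R_subf n f g : R n f -> R n g -> R n (fun v => f v - g v).
Proof. intros. apply (R_c2 n Nat.sub); auto. apply R_sub. Qed.
Lemma R_ifzf n c f g : R n c -> R n f -> R n g -> R n (fun v => ifz (c v) (f v) (g v)).
Proof. intros. apply (R_c3 n ifz); auto. apply R_ifz. Qed.
Lemma R_Sf n f : R n f -> R n (fun v => S (f v)).
Proof. intros. apply (R_c1 n S); auto. apply R_succ. Qed.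

Definition b2n (b : bool) : nat := if b then 1 else 0.
Lemma R_eqb n f g : R n f -> R n g -> R n (fun v => b2n (Nat.eqb (f v) (g v))).
Proof.
  intros Hf Hg. eapply R_ext.
  apply (R_ifzf n (fun v => (f v - g v) + (g v - f v)) (fun _ => 1) (fun _ => 0)).
  apply R_addf; apply R_subf; auto. apply R_const. apply R_const.
  intros v _. unfold ifz. destruct (f v - g v + (g v - f v)) eqn:E; destruct (Nat.eqb_spec (f v) (g v)); simpl; lia.
Qed.
Lemma R_ltb n f g : R n f -> R n g -> R n (fun v => b2n (Nat.ltb (f v) (g v))).
Proof.
  intros Hf Hg. eapply R_ext.
  apply (R_ifzf n (fun v => S (f v) - g v) (fun _ => 1) (fun _ => 0)).
  apply R_subf; auto. apply R_Sf; auto. apply R_const. apply R_const.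
  intros v _. unfold ifz. destruct (S (f v) - g v) eqn:E; destruct (Nat.ltb_spec (f v) (g v)); simpl; lia.
Qed.
Lemma R_ifb n (c : list nat -> bool) f g : R n (fun v => b2n (c v)) -> R n f -> R n g ->
  R n (fun v => if c v then f v else g v).
Proof.
  intros Hc Hf Hg. eapply R_ext. apply (R_ifzf n _ g f Hc); auto.
  intros v _; cbv beta; destruct (c v); reflexivity.
Qed.
Lemma R_andb n (c d : list nat -> bool) : R n (fun v => b2n (c v)) -> R n (fun v => b2n (d v)) ->
  R n (fun v => b2n (c v && d v)).
Proof.
  intros Hc Hd. eapply R_ext. apply (R_ifb n c (fun v => b2n (d v)) (fun _ => 0)); auto. apply R_const.
  intros v _; cbv beta; destruct (c v); reflexivity.
Qed.
Lemma R_orb n (c d : list nat -> bool) : R n (fun v => b2n (c v)) -> R n (fun v => b2n (d v)) ->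
  R n (fun v => b2n (c v || d v)).
Proof.
  intros Hc Hd. eapply R_ext. apply (R_ifb n c (fun _ => 1) (fun v => b2n (d v))); auto. apply R_const.
  intros v _; cbv beta; destruct (c v); reflexivity.
Qed.
Lemma R_negb n (c : list nat -> bool) : R n (fun v => b2n (c v)) -> R n (fun v => b2n (negb (c v))).
Proof.
  intros Hc. eapply R_ext. apply (R_ifb n c (fun _ => 0) (fun _ => 1)); auto; apply R_const.
  intros v _; cbv beta; destruct (c v); reflexivity.
Qed.

Lemma R_nrecf n (X B : list nat -> nat) (St : nat -> nat -> list nat -> nat) :
  R n X -> R n B ->
  R (2 + n) (fun w => St (nth 0 w 0) (nth 1 w 0) (skipn 2 w)) ->
  R n (fun v => nrec (B v) (fun i a => St i a v) (X v)).
Proof. intros. apply R_nrec; auto. Qed.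

(* bounded search: least x < b with f x = true, else b *)
Definition lsearch (f : nat -> bool) (b : nat) : nat :=
  nrec 0 (fun x a => if a <? x then a else if f x then x else S x) b.

Lemma lsearch_spec f b :
  (lsearch f b < b /\ f (lsearch f b) = true /\ forall y, y < lsearch f b -> f y = false) \/
  (lsearch f b = b /\ forall y, y < b -> f y = false).
Proof.
  induction b.
  - right. split. reflexivity. intros; lia.
  - unfold lsearch in *. simpl. destruct IHb as [[H1 [H2 H3]]|[H1 H2]].
    + destruct (Nat.ltb_spec (nrec 0 (fun x a => if a <? x then a else if f x then x else S x) b) b); try lia.
      left. split; auto.
    + rewrite H1, Nat.ltb_irrefl. destruct (f b) eqn:E.
      * left. split; auto.
      * right. split; auto. intros. destruct (Nat.eq_dec y b). subst; auto. apply H2; lia.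
Qed.

Lemma R_lsearch n (F : list nat -> nat) (Bd : list nat -> nat) (f : nat -> list nat -> bool) :
  R (S n) (fun w => b2n (f (nth 0 w 0) (skipn 1 w))) -> R n Bd ->
  R n (fun v => lsearch (fun x => f x v) (Bd v)).
Proof.
  intros Hf HB. unfold lsearch.
  apply (R_nrecf n Bd (fun _ => 0) (fun x a v => if a <? x then a else if f x v then x else S x)); auto.
  apply R_const.
  apply R_ifb. apply R_ltb; [Rp 1|Rp 0].
  Rp 1. apply R_ifb.
  - pose proof (R_cons_env 2 n _ (fun w => nth 0 w 0) Hf) as H.
    eapply R_ext. apply H. Rp 0. intros; simpl. reflexivity.
  - Rp 0.
  - apply R_Sf. Rp 0.
Qed.

Import ListNotations.

Definition tri (t : nat) : nat := nrec 0 (fun i a => a + S i) t.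
Lemma tri_S t : tri (S t) = tri t + S t. Proof. reflexivity. Qed.
Lemma tri_0 : tri 0 = 0. Proof. reflexivity. Qed.
Lemma tri_eq t : t * S t = 2 * tri t.
Proof. induction t. reflexivity. rewrite tri_S. nia. Qed.
Lemma tri_mono s t : s <= t -> tri s <= tri t.
Proof. induction 1. lia. rewrite tri_S. lia. Qed.
Lemma tri_ge t : t <= tri t.
Proof. induction t. simpl; lia. rewrite tri_S. lia. Qed.

Lemma cpair_tri a b : cpair a b = tri (a + b) + b.
Proof.
  unfold cpair. rewrite tri_eq. rewrite (Nat.mul_comm 2). rewrite Nat.div_mul by lia. reflexivity.
Qed.

Definition unps (N : nat) : nat := lsearch (fun t => N <? tri (S t)) (S N).
Definition unp2 (N : nat) : nat := N - tri (unps N).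
Definition unp1 (N : nat) : nat := unps N - unp2 N.

Lemma unps_spec N : tri (unps N) <= N < tri (S (unps N)).
Proof.
  unfold unps. destruct (lsearch_spec (fun t => N <? tri (S t)) (S N)) as [[H1 [H2 H3]]|[H1 H2]].
  - apply Nat.ltb_lt in H2. split; auto.
    remember (lsearch (fun t => N <? tri (S t)) (S N)) as s. destruct s. rewrite tri_0; lia.
    specialize (H3 s (Nat.lt_succ_diag_r s)). apply Nat.ltb_ge in H3. auto.
  - exfalso. specialize (H2 N (Nat.lt_succ_diag_r N)). apply Nat.ltb_ge in H2.
    pose proof (tri_ge (S N)). lia.
Qed.

Lemma tri_uniq s t N : tri s <= N < tri (S s) -> tri t <= N < tri (S t) -> s = t.
Proof.
  intros. destruct (Nat.lt_trichotomy s t) as [H1|[H1|H1]]; auto.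
  - pose proof (tri_mono (S s) t H1). lia.
  - pose proof (tri_mono (S t) s H1). lia.
Qed.

Lemma unp_cpair a b : unp1 (cpair a b) = a /\ unp2 (cpair a b) = b.
Proof.
  rewrite cpair_tri.
  assert (E : unps (tri (a + b) + b) = a + b).
  { apply (tri_uniq _ _ (tri (a+b) + b)). apply unps_spec. rewrite tri_S. lia. }
  unfold unp1, unp2. rewrite E. lia.
Qed.
Lemma unp1_cpair a b : unp1 (cpair a b) = a. Proof. apply unp_cpair. Qed.
Lemma unp2_cpair a b : unp2 (cpair a b) = b. Proof. apply unp_cpair. Qed.

Lemma R_tri n f : R n f -> R n (fun v => tri (f v)).
Proof.
  intros Hf. unfold tri.
  apply (R_nrecf n f (fun _ => 0) (fun i a _ => a + S i)); auto. apply R_const.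
  apply R_addf. Rp 1. apply R_Sf. Rp 0.
Qed.

Lemma R_cpair n f g : R n f -> R n g -> R n (fun v => cpair (f v) (g v)).
Proof.
  intros Hf Hg. eapply R_ext. 2:{ intros. symmetry. apply cpair_tri. }
  apply R_addf; auto. apply R_tri. apply R_addf; auto.
Qed.

Lemma R_unps n f : R n f -> R n (fun v => unps (f v)).
Proof.
  intros Hf. unfold unps.
  apply (R_lsearch n (fun _ => 0) (fun v => S (f v)) (fun t v => f v <? tri (S t))).
  - apply R_ltb. apply (R_lift 1 n f Hf). apply R_tri. apply R_Sf. Rp 0.
  - apply R_Sf; auto.
Qed.
Lemma R_unp2 n f : R n f -> R n (fun v => unp2 (f v)).
Proof. intros Hf. unfold unp2. apply R_subf; auto. apply R_tri. apply R_unps; auto. Qed.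
Lemma R_unp1 n f : R n f -> R n (fun v => unp1 (f v)).
Proof. intros Hf. unfold unp1. apply R_subf. apply R_unps; auto. apply R_unp2; auto. Qed.

Import ListNotations.

Definition ltl (c : nat) : nat := unp2 (pred c).
Definition lhd (c : nat) : nat := unp1 (pred c).
Definition ltlk (c k : nat) : nat := nrec c (fun _ a => ltl a) k.
Definition llen (c : nat) : nat := lsearch (fun k => ltlk c k =? 0) (S c).
Definition lnth (c i : nat) : nat := lhd (ltlk c i).
Definition ldec (c : nat) : list bool := map (fun i => lnth c i =? 1) (seq 0 (llen c)).

Lemma ltl_cons b l : ltl (lcode (b :: l)) = lcode l.
Proof. unfold ltl. simpl. apply unp2_cpair. Qed.
Lemma lhd_cons b l : lhd (lcode (b :: l)) = b2n b.
Proof. unfold lhd. simpl. rewrite unp1_cpair. destruct b; reflexivity. Qed.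

Lemma ltlk_S c k : ltlk c (S k) = ltl (ltlk c k). Proof. reflexivity. Qed.
Lemma ltl_tl l : ltl (lcode l) = lcode (tl l).
Proof. destruct l. reflexivity. apply ltl_cons. Qed.
Lemma skipn_S_tl {A} k (l : list A) : skipn (S k) l = tl (skipn k l).
Proof. revert l; induction k; intros [|a l]; simpl; auto. rewrite <- IHk. destruct l; reflexivity. Qed.
Lemma ltlk_lcode l k : ltlk (lcode l) k = lcode (skipn k l).
Proof.
  induction k. reflexivity.
  rewrite ltlk_S, IHk, ltl_tl, skipn_S_tl. reflexivity.
Qed.

Lemma lcode_len l : length l <= lcode l.
Proof. induction l; simpl. lia. rewrite cpair_tri. lia. Qed.
Lemma lcode_zero l : lcode l = 0 <-> l = [].
Proof. destruct l; simpl; split; intro; congruence. Qed.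

Lemma llen_lcode l : llen (lcode l) = length l.
Proof.
  unfold llen.
  destruct (lsearch_spec (fun k => ltlk (lcode l) k =? 0) (S (lcode l))) as [[H1 [H2 H3]]|[H1 H2]].
  - apply Nat.eqb_eq in H2. rewrite ltlk_lcode, lcode_zero in H2.
    set (s := lsearch _ _) in *.
    assert (length (skipn s l) = 0) by (rewrite H2; reflexivity). rewrite length_skipn in H.
    destruct (Nat.eq_dec s (length l)); auto.
    assert (s > length l) by lia. exfalso.
    specialize (H3 (length l) H0). apply Nat.eqb_neq in H3. apply H3.
    rewrite ltlk_lcode, lcode_zero. apply skipn_all.
  - exfalso. pose proof (lcode_len l). specialize (H2 (length l) ltac:(lia)).
    apply Nat.eqb_neq in H2. apply H2. rewrite ltlk_lcode, lcode_zero. apply skipn_all.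
Qed.

Lemma lnth_lcode l i : i < length l -> lnth (lcode l) i = b2n (nth i l false).
Proof.
  intros Hi. unfold lnth. rewrite ltlk_lcode.
  revert i Hi. induction l; simpl; intros. lia.
  destruct i. simpl. apply lhd_cons. simpl. apply IHl. lia.
Qed.

Lemma length_ldec c : length (ldec c) = llen c.
Proof. unfold ldec. rewrite length_map, length_seq. auto. Qed.
Lemma nth_ldec c i : i < llen c -> nth i (ldec c) false = (lnth c i =? 1).
Proof.
  intros. unfold ldec. set (f := fun i => lnth c i =? 1).
  rewrite (nth_indep _ false (f 0)) by (rewrite length_map, length_seq; auto).
  rewrite map_nth, seq_nth by auto. reflexivity.
Qed.

Lemma ldec_lcode l : ldec (lcode l) = l.
Proof.
  apply (nth_ext _ _ false false). rewrite length_ldec, llen_lcode; auto.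
  intros i Hi. rewrite length_ldec, llen_lcode in Hi.
  rewrite nth_ldec by (rewrite llen_lcode; auto). rewrite lnth_lcode by auto.
  destruct (nth i l false); reflexivity.
Qed.

Lemma R_ltl n f : R n f -> R n (fun v => ltl (f v)).
Proof. intros. unfold ltl. apply R_unp2. apply (R_c1 n pred); auto. apply R_pred. Qed.
Lemma R_lhd n f : R n f -> R n (fun v => lhd (f v)).
Proof. intros. unfold lhd. apply R_unp1. apply (R_c1 n pred); auto. apply R_pred. Qed.
Lemma R_ltlk n f g : R n f -> R n g -> R n (fun v => ltlk (f v) (g v)).
Proof.
  intros. unfold ltlk. apply (R_nrecf n g f (fun _ a _ => ltl a)); auto.
  apply R_ltl. Rp 1.
Qed.
Lemma R_llen n f : R n f -> R n (fun v => llen (f v)).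
Proof.
  intros. unfold llen.
  apply (R_lsearch n (fun _ => 0) (fun v => S (f v)) (fun k v => ltlk (f v) k =? 0)).
  - apply R_eqb. apply R_ltlk. apply (R_lift 1 n f H). Rp 0. apply R_const.
  - apply R_Sf; auto.
Qed.
Lemma R_lnth n f g : R n f -> R n g -> R n (fun v => lnth (f v) (g v)).
Proof. intros. unfold lnth. apply R_lhd. apply R_ltlk; auto. Qed.

Open Scope bool_scope.
Import ListNotations.

Definition res := option (option bool).
Definition dle (a a' : nat -> res) := forall i x, a i = Some x -> a' i = Some x.

Fixpoint rpb (r : nat -> res) (k j : nat) : option (option (list bool)) :=
  match j with
  | 0 => Some (Some [])
  | S j' =>
    match rpb r k j' with
    | None => None
    | Some None => Some None
    | Some (Some l) =>
      match r (k - S j') with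
      | None => None
      | Some None => Some None
      | Some (Some b) => Some (Some (b :: l))
      end
    end
  end.
Definition rpre r k := rpb r k k.

Lemma rpb_mono r r' k j x : dle r r' -> rpb r k j = Some x -> rpb r' k j = Some x.
Proof.
  intros Hd. revert x. induction j; intros x H; simpl in *; auto.
  destruct (rpb r k j) as [[l|]|] eqn:E; try discriminate.
  - rewrite (IHj _ eq_refl). destruct (r (k - S j)) as [[b|]|] eqn:E2; try discriminate;
    rewrite (Hd _ _ E2); auto.
  - rewrite (IHj _ eq_refl). auto.
Qed.

Lemma rpb_ok r k j (f : nat -> bool) : j <= k -> (forall i, i < k -> r i = Some (Some (f i))) ->
  rpb r k j = Some (Some (map f (seq (k - j) j))).
Proof.
  intros Hj Hr. induction j; simpl. reflexivity.
  rewrite IHj by lia. rewrite Hr by lia. do 2 f_equal.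
  replace (S (k - S j)) with (k - j) by lia. reflexivity.
Qed.
Lemma rpre_ok r k (f : nat -> bool) : (forall i, i < k -> r i = Some (Some (f i))) ->
  rpre r k = Some (Some (map f (seq 0 k))).
Proof. intros. unfold rpre. rewrite (rpb_ok r k k f); auto. rewrite Nat.sub_diag. auto. Qed.

Lemma rpb_val r k j l : j <= k -> rpb r k j = Some (Some l) ->
  length l = j /\ forall i, i < j -> r (k - j + i) = Some (Some (nth i l false)).
Proof.
  revert l. induction j; intros l Hj H; simpl in *.
  - inversion H; subst. split; auto. intros; lia.
  - destruct (rpb r k j) as [[l'|]|] eqn:E; try discriminate.
    destruct (r (k - S j)) as [[b|]|] eqn:E2; try discriminate.
    inversion H; subst. destruct (IHj l' ltac:(lia) eq_refl) as [H1 H2].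
    split. simpl; auto. intros i Hi. destruct i.
    + rewrite Nat.add_0_r. auto.
    + simpl. replace (k - S j + S i) with (k - j + i) by lia. apply H2. lia.
Qed.
Lemma rpre_val r k l : rpre r k = Some (Some l) ->
  length l = k /\ forall i, i < k -> r i = Some (Some (nth i l false)).
Proof.
  intros H. destruct (rpb_val r k k l (le_n _) H) as [H1 H2]. split; auto.
  intros i Hi. specialize (H2 i Hi). rewrite Nat.sub_diag in H2. auto.
Qed.

Lemma rpb_nn r k j : (forall i, r i <> None) -> rpb r k j <> None.
Proof.
  intros Hr. induction j; simpl. discriminate.
  destruct (rpb r k j) as [[l|]|]; try discriminate. 2: congruence.
  specialize (Hr (k - S j)). destruct (r (k - S j)) as [[b|]|]; congruence.
Qed.

Fixpoint pdb (a r : nat -> res) (n K j : nat) : res :=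
  match j with
  | 0 => Some None
  | S j' =>
    match rpre r (K - S j') with
    | None => None
    | Some None => Some None
    | Some (Some l) =>
      match a (qcode n l true) with
      | None => None
      | Some None => Some None
      | Some (Some x1) =>
        match a (qcode n l false) with
        | None => None
        | Some None => Some None
        | Some (Some x2) => if x1 || x2 then Some (Some x1) else pdb a r n K j'
        end
      end
    end
  end.
Definition pdet a r n K := pdb a r n K K.

Lemma pdb_mono a a' r r' n K j x : dle a a' -> dle r r' -> pdb a r n K j = Some x -> pdb a' r' n K j = Some x.
Proof.
  intros Ha Hr. revert x. induction j; intros x H; simpl in *; auto.
  destruct (rpre r (K - S j)) as [[l|]|] eqn:E; try discriminate.
  - unfold rpre in *. rewrite (rpb_mono _ _ _ _ _ Hr E).
    destruct (a (qcode n l true)) as [[x1|]|] eqn:E1; try discriminate.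
    + rewrite (Ha _ _ E1). destruct (a (qcode n l false)) as [[x2|]|] eqn:E2; try discriminate.
      * rewrite (Ha _ _ E2). destruct (x1 || x2); auto.
      * rewrite (Ha _ _ E2). auto.
    + rewrite (Ha _ _ E1). auto.
  - unfold rpre in *. rewrite (rpb_mono _ _ _ _ _ Hr E). auto.
Qed.
Lemma pdet_mono a a' r r' n K x : dle a a' -> dle r r' -> pdet a r n K = Some x -> pdet a' r' n K = Some x.
Proof. apply pdb_mono. Qed.

Lemma pdb_nn a r n K j : (forall i, a i <> None) -> (forall i, r i <> None) -> pdb a r n K j <> None.
Proof.
  intros Ha Hr. induction j; simpl. discriminate.
  pose proof (rpb_nn r (K - S j) (K - S j) Hr). unfold rpre.
  destruct (rpb r (K - S j) (K - S j)) as [[l|]|]; try congruence.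
  pose proof (Ha (qcode n l true)). destruct (a (qcode n l true)) as [[x1|]|]; try congruence.
  pose proof (Ha (qcode n l false)). destruct (a (qcode n l false)) as [[x2|]|]; try congruence.
  destruct (x1 || x2); congruence.
Qed.
Lemma pdet_nn a r n K : (forall i, a i <> None) -> (forall i, r i <> None) -> pdet a r n K <> None.
Proof. apply pdb_nn. Qed.

Definition sound (a : nat -> res) (af : nat -> bool) := forall i x, a i = Some (Some x) -> x = af i.

Lemma rpre_sound r rf k l : sound r rf -> rpre r k = Some (Some l) -> l = prefix rf k.
Proof.
  intros Hs H. destruct (rpre_val _ _ _ H) as [H1 H2].
  apply (nth_ext _ _ false false). unfold prefix. rewrite length_map, length_seq; auto.
  intros i Hi. unfold prefix. rewrite H1 in Hi.
  rewrite (nth_indep (map rf (seq 0 k)) false (rf 0)) by (rewrite length_map, length_seq; auto).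
  rewrite map_nth, seq_nth by auto. simpl. apply Hs. apply H2. auto.
Qed.

Lemma pdb_sound a r af rf n K j v : sound a af -> sound r rf -> j <= K ->
  pdb a r n K j = Some (Some v) ->
  exists k, K - j <= k < K /\ fires af n rf k = true /\ v = af (qcode n (prefix rf k) true) /\
    forall k', K - j <= k' < k -> fires af n rf k' = false.
Proof.
  intros Ha Hr. induction j; intros Hj H; simpl in H. discriminate.
  destruct (rpre r (K - S j)) as [[l|]|] eqn:E; try discriminate.
  pose proof (rpre_sound _ _ _ _ Hr E) as El. subst l.
  destruct (a (qcode n (prefix rf (K - S j)) true)) as [[x1|]|] eqn:E1; try discriminate.
  destruct (a (qcode n (prefix rf (K - S j)) false)) as [[x2|]|] eqn:E2; try discriminate.
  apply Ha in E1. apply Ha in E2.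
  assert (Hf : fires af n rf (K - S j) = x1 || x2) by (unfold fires; subst; reflexivity).
  destruct (x1 || x2) eqn:Ex.
  - inversion H; subst. exists (K - S j). split. lia. split; auto. split; auto. intros; lia.
  - destruct (IHj ltac:(lia) H) as [k [Hk1 [Hk2 [Hk3 Hk4]]]].
    exists k. split. lia. split; auto. split; auto.
    intros k' Hk'. destruct (Nat.eq_dec k' (K - S j)). subst; auto. apply Hk4. lia.
Qed.

Lemma first_fire_unique af rf s n k : assoc_app af rf s -> fires af n rf k = true ->
  (forall k', k' < k -> fires af n rf k' = false) -> s n = af (qcode n (prefix rf k) true).
Proof.
  intros H Hf Hm. destruct (H n) as [k0 [H1 [H2 H3]]].
  destruct (Nat.lt_trichotomy k k0) as [Hl|[He|Hl]].
  - rewrite H2 in Hf by auto. discriminate.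
  - subst; auto.
  - rewrite Hm in H1 by auto. discriminate.
Qed.

Lemma pdet_sound a r af rf s n K v : sound a af -> sound r rf -> assoc_app af rf s ->
  pdet a r n K = Some (Some v) -> v = s n.
Proof.
  intros Ha Hr Hs H. destruct (pdb_sound a r af rf n K K v Ha Hr (le_n _) H) as [k [Hk1 [Hk2 [Hk3 Hk4]]]].
  rewrite Nat.sub_diag in Hk4. subst v. symmetry. apply (first_fire_unique _ _ _ _ _ Hs Hk2).
  intros; apply Hk4; lia.
Qed.

Definition firept (af rf : nat -> bool) n k := fires af n rf k = true /\ forall k', k' < k -> fires af n rf k' = false.

Lemma firept_ex af rf s n : assoc_app af rf s -> exists k, firept af rf n k /\ s n = af (qcode n (prefix rf k) true).
Proof. intros H. destruct (H n) as [k [H1 [H2 H3]]]. exists k. split; [split|]; auto. Qed.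

Lemma pdet_complete a r af rf s n K kf : assoc_app af rf s -> firept af rf n kf -> kf < K ->
  (forall i, i < kf -> r i = Some (Some (rf i))) ->
  (forall k c, k <= kf -> a (qcode n (prefix rf k) c) = Some (Some (af (qcode n (prefix rf k) c)))) ->
  pdet a r n K = Some (Some (s n)).
Proof.
  intros Hs [Hf Hm] HK Hr Ha.
  assert (Hv : s n = af (qcode n (prefix rf kf) true)) by (apply (first_fire_unique _ _ _ _ _ Hs Hf Hm)).
  unfold pdet. assert (forall j, j <= K -> K - j <= kf -> pdb a r n K j = Some (Some (s n))).
  { induction j; intros Hj1 Hj2. lia. simpl.
    rewrite (rpre_ok r (K - S j) rf) by (intros; apply Hr; lia). fold (prefix rf (K - S j)).
    rewrite !Ha by lia.
    assert (Hf' : fires af n rf (K - S j) = af (qcode n (prefix rf (K - S j)) true) || af (qcode n (prefix rf (K - S j)) false)) by reflexivity.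
    destruct (Nat.eq_dec (K - S j) kf).
    - rewrite e in *. rewrite <- Hf', Hf. rewrite Hv. reflexivity.
    - rewrite <- Hf'. rewrite Hm by lia. apply IHj; lia. }
  apply H; lia.
Qed.

Definition Cont {T} (F : (nat -> res) -> T) :=
  forall d, exists B, forall d', (forall i, i < B -> d' i = d i) -> F d' = F d.

Lemma Cont_const {T} (t : T) : Cont (fun _ => t).
Proof. intros d. exists 0. auto. Qed.
Lemma Cont_pt i : Cont (fun d : nat -> res => d i).
Proof. intros d. exists (S i). intros d' H. apply H. lia. Qed.
Lemma Cont_bind {T U} (F : (nat -> res) -> T) (G : T -> (nat -> res) -> U) :
  Cont F -> (forall x, Cont (G x)) -> Cont (fun d => G (F d) d).
Proof.
  intros HF HG d. destruct (HF d) as [B1 H1]. destruct (HG (F d) d) as [B2 H2].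
  exists (max B1 B2). intros d' H. rewrite H1 by (intros; apply H; lia). apply H2. intros; apply H; lia.
Qed.
Lemma Cont_ext {T} (F G : (nat -> res) -> T) : Cont F -> (forall d, F d = G d) -> Cont G.
Proof. intros H E d. destruct (H d) as [B HB]. exists B. intros. rewrite <- !E. auto. Qed.

Ltac cc := let d := fresh "d" in intros d; exists 0; intros; reflexivity.
Lemma rpb_cont (Rr : (nat -> res) -> nat -> res) k j : (forall i, Cont (fun d => Rr d i)) ->
  Cont (fun d => rpb (Rr d) k j).
Proof.
  intros HR. induction j. cc.
  simpl. apply (Cont_bind (fun d => rpb (Rr d) k j)
    (fun x d => match x with None => None | Some None => Some None | Some (Some l) =>
      match Rr d (k - S j) with None => None | Some None => Some None | Some (Some b) => Some (Some (b :: l)) end end)); auto.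
  intros [[l|]|]; try cc.
  apply (Cont_bind (fun d => Rr d (k - S j)) (fun y _ => match y with None => None | Some None => Some None | Some (Some b) => Some (Some (b :: l)) end)); auto.
  intros; cc.
Qed.
Lemma rpre_cont (Rr : (nat -> res) -> nat -> res) k : (forall i, Cont (fun d => Rr d i)) ->
  Cont (fun d => rpre (Rr d) k).
Proof. intros. apply rpb_cont. auto. Qed.

Lemma pdb_cont (A Rr : (nat -> res) -> nat -> res) n K j :
  (forall i, Cont (fun d => A d i)) -> (forall i, Cont (fun d => Rr d i)) ->
  Cont (fun d => pdb (A d) (Rr d) n K j).
Proof.
  intros HA HR. induction j. cc.
  simpl. apply (Cont_bind (fun d => rpre (Rr d) (K - S j))
    (fun x d => match x with None => None | Some None => Some None | Some (Some l) =>
      match A d (qcode n l true) with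
      | None => None | Some None => Some None
      | Some (Some x1) =>
        match A d (qcode n l false) with
        | None => None | Some None => Some None
        | Some (Some x2) => if x1 || x2 then Some (Some x1) else pdb (A d) (Rr d) n K j
        end end end)).
  apply rpre_cont; auto.
  intros [[l|]|]; try cc.
  apply (Cont_bind (fun d => A d (qcode n l true)) (fun y d =>
      match y with
      | None => None | Some None => Some None
      | Some (Some x1) =>
        match A d (qcode n l false) with
        | None => None | Some None => Some None
        | Some (Some x2) => if x1 || x2 then Some (Some x1) else pdb (A d) (Rr d) n K j
        end end)); auto.
  intros [[x1|]|]; try cc.
  apply (Cont_bind (fun d => A d (qcode n l false)) (fun y d =>
        match y with
        | None => None | Some None => Some None
        | Some (Some x2) => if x1 || x2 then Some (Some x1) else pdb (A d) (Rr d) n K j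
        end)); auto.
  intros [[x2|]|]; try cc.
  destruct (x1 || x2). cc. auto.
Qed.
Lemma pdet_cont (A Rr : (nat -> res) -> nat -> res) n K :
  (forall i, Cont (fun d => A d i)) -> (forall i, Cont (fun d => Rr d i)) ->
  Cont (fun d => pdet (A d) (Rr d) n K).
Proof. apply pdb_cont. Qed.

Import ListNotations.
Open Scope bool_scope.

Definition stage (l : list bool) : nat -> res :=
  fun i => match nth_error l i with Some b => Some (Some b) | None => Some None end.
Definition dpre (l : list bool) : nat -> res :=
  fun i => match nth_error l i with Some b => Some (Some b) | None => None end.
Definition tot (f : nat -> bool) : nat -> res := fun i => Some (Some (f i)).

Definition obT := (nat -> res) -> nat -> list bool -> res.

Definition OG (ob : obT) (d : nat -> res) (N : nat) : option bool :=
  match ob d (unp1 N) (ldec (unp1 (unp2 N))) with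
  | None => None
  | Some x => Some (match x with Some b => Bool.eqb b (unp2 (unp2 N) =? 1) | None => false end)
  end.
Definition Oseq (ob : obT) (pg : nat -> bool) (N : nat) : bool :=
  match OG ob (tot pg) N with Some c => c | None => false end.
Definition Pseq (ob : obT) (M : nat) : bool :=
  match OG ob (dpre (ldec (unp1 (unp2 M)))) (unp1 M) with
  | None => false
  | Some c => Bool.eqb c (unp2 (unp2 M) =? 1)
  end.

Lemma qcode_dec n l b : unp1 (qcode n l b) = n /\ ldec (unp1 (unp2 (qcode n l b))) = l /\
  (unp2 (unp2 (qcode n l b)) =? 1) = b.
Proof.
  unfold qcode. rewrite unp1_cpair, unp2_cpair, unp1_cpair, unp2_cpair, ldec_lcode.
  destruct b; auto.
Qed.

Definition obmono (ob : obT) := forall d d' n lq x, dle d d' -> ob d n lq = Some x -> ob d' n lq = Some x.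
Definition obcont (ob : obT) := forall n lq, Cont (fun d => ob d n lq).

Lemma nth_error_prefix (pg : nat -> bool) k i : nth_error (prefix pg k) i = if i <? k then Some (pg i) else None.
Proof. unfold prefix. rewrite nth_error_map, nth_error_seq. destruct (i <? k); reflexivity. Qed.

Lemma dpre_prefix_dle pg k : dle (dpre (prefix pg k)) (tot pg).
Proof.
  intros i x H. unfold dpre, tot in *. rewrite nth_error_prefix in H.
  destruct (i <? k); congruence.
Qed.
Lemma dpre_prefix_agree pg k i : i < k -> dpre (prefix pg k) i = tot pg i.
Proof. intros. unfold dpre, tot. rewrite nth_error_prefix. apply Nat.ltb_lt in H. rewrite H. auto. Qed.

Lemma OG_cont ob N : obcont ob -> Cont (fun d => OG ob d N).
Proof.
  intros Hc. unfold OG.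
  apply (Cont_bind (fun d => ob d (unp1 N) (ldec (unp1 (unp2 N))))
    (fun x _ => match x with None => None | Some x => Some (match x with Some b => Bool.eqb b (unp2 (unp2 N) =? 1) | None => false end) end)).
  apply Hc. intros; cc.
Qed.

Lemma G1 ob pg : obmono ob -> obcont ob -> (forall n lq, ob (tot pg) n lq <> None) ->
  assoc_app (Pseq ob) pg (Oseq ob pg).
Proof.
  intros Hm Hc Hn N.
  set (P := fun k => match OG ob (dpre (prefix pg k)) N with None => false | Some _ => true end).
  destruct (OG_cont ob N Hc (tot pg)) as [B HB].
  assert (HPB : P B = true).
  { unfold P. rewrite HB by (intros; apply dpre_prefix_agree; auto). unfold OG.
    specialize (Hn (unp1 N) (ldec (unp1 (unp2 N)))). destruct (ob (tot pg) _ _); congruence. }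
  assert (Hfire : forall k, fires (Pseq ob) N pg k = P k).
  { intros k. unfold fires, Pseq, P.
    destruct (qcode_dec N (prefix pg k) true) as [E1 [E2 E3]]. rewrite E1, E2, E3.
    destruct (qcode_dec N (prefix pg k) false) as [F1 [F2 F3]]. rewrite F1, F2, F3.
    destruct (OG ob (dpre (prefix pg k)) N) as [c|]; auto. destruct c; reflexivity. }
  destruct (lsearch_spec P (S B)) as [[H1 [H2 H3]]|[H1 H2]].
  2:{ exfalso. rewrite H2 in HPB by lia. discriminate. }
  set (k := lsearch P (S B)) in *.
  exists k. split. rewrite Hfire; auto. split. intros; rewrite Hfire; auto.
  unfold Pseq. destruct (qcode_dec N (prefix pg k) true) as [E1 [E2 E3]]. rewrite E1, E2, E3.
  unfold P in H2. destruct (OG ob (dpre (prefix pg k)) N) as [c|] eqn:EO; try discriminate.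
  unfold Oseq. unfold OG in EO |- *.
  destruct (ob (dpre (prefix pg k)) (unp1 N) (ldec (unp1 (unp2 N)))) as [x|] eqn:Eob; try discriminate.
  rewrite (Hm _ _ _ _ _ (dpre_prefix_dle pg k) Eob). inversion EO; subst. destruct (match x with Some b => _ | None => false end); reflexivity.
Qed.

Import ListNotations.
Open Scope bool_scope.

Definition ob2 (idn : nat -> bool) : obT := fun d n lq =>
  pdet (fun j => pdet d (stage lq) j (length lq)) (tot idn) n (length lq).

Definition Abit (m : nat -> bool) (n2 : nat) (lu : list bool) (b2 : bool) (rl : list bool) : bool :=
  match pdet (fun j => pdet (tot m) (stage lu) j (length lu)) (stage rl) n2 (length lu) with
  | Some (Some v) => Bool.eqb v b2
  | _ => false
  end.

Definition ob1 (m : nat -> bool) : obT := fun d n lq =>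
  match rpre (fun i => pdet d (stage lq) i (length lq)) (length (ldec (unp1 (unp2 n)))) with
  | None => None
  | Some None => Some None
  | Some (Some rl) => Some (Some (Abit m (unp1 n) (ldec (unp1 (unp2 n))) (unp2 (unp2 n) =? 1) rl))
  end.

Lemma stage_nn l i : stage l i <> None.
Proof. unfold stage. destruct (nth_error l i); discriminate. Qed.
Lemma tot_nn f i : tot f i <> None.
Proof. discriminate. Qed.

Lemma ob2_mono idn : obmono (ob2 idn).
Proof.
  intros d d' n lq x Hd H. unfold ob2 in *. eapply pdet_mono; [| |exact H].
  intros j y Hj. eapply pdet_mono; eauto. intros i y' Hy; auto. intros i y' Hy; auto.
Qed.
Lemma ob2_cont idn : obcont (ob2 idn).
Proof.
  intros n lq. unfold ob2.
  apply (pdet_cont (fun d j => pdet d (stage lq) j (length lq)) (fun _ => tot idn)).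
  intros i. apply (pdet_cont (fun d => d) (fun _ => stage lq)). intros; apply Cont_pt. intros; cc.
  intros; cc.
Qed.
Lemma ob2_nn idn pg n lq : ob2 idn (tot pg) n lq <> None.
Proof.
  unfold ob2. apply pdet_nn. intros. apply pdet_nn. apply tot_nn. apply stage_nn. apply tot_nn.
Qed.

Lemma ob1_mono m : obmono (ob1 m).
Proof.
  intros d d' n lq x Hd H. unfold ob1 in *. unfold rpre in *.
  destruct (rpb (fun i => pdet d (stage lq) i (length lq)) _ _) as [y|] eqn:E; try discriminate.
  erewrite rpb_mono; [exact H| |exact E].
  intros i z Hz. eapply pdet_mono; eauto. intros ? ? ?; auto.
Qed.
Lemma ob1_cont m : obcont (ob1 m).
Proof.
  intros n lq. unfold ob1.
  set (L := length (ldec (unp1 (unp2 n)))).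
  apply (Cont_bind (fun d => rpre (fun i => pdet d (stage lq) i (length lq)) L)
    (fun x _ => match x with None => None | Some None => Some None
      | Some (Some rl) => Some (Some (Abit m (unp1 n) (ldec (unp1 (unp2 n))) (unp2 (unp2 n) =? 1) rl)) end)).
  apply (rpre_cont (fun d i => pdet d (stage lq) i (length lq))). intros i.
  apply (pdet_cont (fun d => d) (fun _ => stage lq)). intros; apply Cont_pt. intros; cc.
  intros; cc.
Qed.
Lemma ob1_nn m pg n lq : ob1 m (tot pg) n lq <> None.
Proof.
  unfold ob1. pose proof (rpb_nn (fun i => pdet (tot pg) (stage lq) i (length lq))
    (length (ldec (unp1 (unp2 n)))) (length (ldec (unp1 (unp2 n))))) as H.
  unfold rpre. destruct (rpb _ _ _) as [[rl|]|]; try discriminate.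
  exfalso. apply H; auto. intros. apply pdet_nn. apply tot_nn. apply stage_nn.
Qed.

Lemma G2 (O q s : nat -> bool) (F : nat -> nat -> res) :
  (forall n k b, O (qcode n (prefix q k) b) = match F n k with Some (Some v) => Bool.eqb v b | _ => false end) ->
  (forall n, exists k, F n k = Some (Some (s n))) ->
  (forall n k v, F n k = Some (Some v) -> v = s n) ->
  assoc_app O q s.
Proof.
  intros HO Hex Hs n.
  set (P := fun k => match F n k with Some (Some _) => true | _ => false end).
  assert (Hfire : forall k, fires O n q k = P k).
  { intros k. unfold fires, P. rewrite !HO. destruct (F n k) as [[v|]|]; auto. destruct v; reflexivity. }
  destruct (Hex n) as [k0 Hk0].
  destruct (lsearch_spec P (S k0)) as [[H1 [H2 H3]]|[H1 H2]].
  2:{ exfalso. specialize (H2 k0 ltac:(lia)). unfold P in H2. rewrite Hk0 in H2. discriminate. }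
  set (k := lsearch P (S k0)) in *.
  exists k. split. rewrite Hfire; auto. split. intros; rewrite Hfire; auto.
  rewrite HO. unfold P in H2. destruct (F n k) as [[v|]|] eqn:E; try discriminate.
  rewrite (Hs _ _ _ E). destruct (s n); reflexivity.
Qed.

Lemma ev_range (P : nat -> nat -> Prop) L :
  (forall i, i < L -> exists ki, forall k, ki <= k -> P i k) ->
  exists k0, forall k, k0 <= k -> forall i, i < L -> P i k.
Proof.
  induction L; intros H. exists 0. intros; lia.
  destruct IHL as [k1 H1]. intros; apply H; lia.
  destruct (H L ltac:(lia)) as [k2 H2]. exists (max k1 k2). intros k Hk i Hi.
  destruct (Nat.eq_dec i L). subst; apply H2; lia. apply H1; lia.
Qed.

Lemma ev_queries (P : nat -> nat -> Prop) n (rf : nat -> bool) kf :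
  (forall j, exists kj, forall k, kj <= k -> P j k) ->
  exists k0, forall k, k0 <= k -> forall k' c, k' <= kf -> P (qcode n (prefix rf k') c) k.
Proof.
  intros H.
  destruct (ev_range (fun i k => P (qcode n (prefix rf i) true) k /\ P (qcode n (prefix rf i) false) k) (S kf)) as [k0 Hk0].
  { intros i _. destruct (H (qcode n (prefix rf i) true)) as [a Ha]. destruct (H (qcode n (prefix rf i) false)) as [b Hb].
    exists (max a b). intros; split; [apply Ha|apply Hb]; lia. }
  exists k0. intros k Hk k' c Hk'. assert (Hl : k' < S kf) by lia. destruct (Hk0 k Hk k' Hl). destruct c; auto.
Qed.

Lemma length_prefix (q : nat -> bool) k : length (prefix q k) = k.
Proof. unfold prefix. rewrite length_map, length_seq. auto. Qed.
Lemma stage_prefix (q : nat -> bool) k i : i < k -> stage (prefix q k) i = Some (Some (q i)).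
Proof. intros. unfold stage. rewrite nth_error_prefix. apply Nat.ltb_lt in H. rewrite H. auto. Qed.
Lemma stage_sound (q : nat -> bool) k : sound (stage (prefix q k)) q.
Proof.
  intros i x H. unfold stage in H. rewrite nth_error_prefix in H. destruct (i <? k); congruence.
Qed.
Lemma tot_sound f : sound (tot f) f.
Proof. intros i x H. unfold tot in H. congruence. Qed.

Lemma pdet_ev (p q s : nat -> bool) j : assoc_app p q s ->
  exists kj, forall k, kj <= k -> pdet (tot p) (stage (prefix q k)) j k = Some (Some (s j)).
Proof.
  intros H. destruct (firept_ex p q s j H) as [kf [Hf _]]. exists (S kf). intros k Hk.
  apply (pdet_complete _ _ p q s j k kf H Hf). lia. intros; apply stage_prefix; lia.
  intros; reflexivity.
Qed.
Lemma pdet_stage_sound (p q s : nat -> bool) k : assoc_app p q s ->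
  sound (fun j => pdet (tot p) (stage (prefix q k)) j k) s.
Proof.
  intros H j x Hx. eapply pdet_sound; eauto. apply tot_sound. apply stage_sound.
Qed.

Lemma psi_stage ph q wf idn s : assoc_app ph q wf -> assoc_app wf idn s ->
  assoc_app (Oseq (ob2 idn) ph) q s.
Proof.
  intros Hw Hs.
  apply (G2 _ q s (fun n k => ob2 idn (tot ph) n (prefix q k))).
  - intros n k b. unfold Oseq, OG. destruct (qcode_dec n (prefix q k) b) as [E1 [E2 E3]].
    rewrite E1, E2, E3. pose proof (ob2_nn idn ph n (prefix q k)).
    destruct (ob2 idn (tot ph) n (prefix q k)) as [[v|]|]; congruence.
  - intros n. destruct (firept_ex wf idn s n Hs) as [kf [Hf _]].
    destruct (ev_queries (fun j k => pdet (tot ph) (stage (prefix q k)) j k = Some (Some (wf j))) n idn kf)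
      as [k0 Hk0].
    { intros j. apply pdet_ev; auto. }
    exists (max k0 (S kf)). unfold ob2. rewrite length_prefix.
    apply (pdet_complete _ _ wf idn s n _ kf Hs Hf). lia. intros; reflexivity.
    intros k' c Hk'. apply Hk0; auto. lia.
  - intros n k v H. unfold ob2 in H. rewrite length_prefix in H.
    eapply pdet_sound; [| |exact Hs|exact H]. apply pdet_stage_sound; auto. apply tot_sound.
Qed.

Definition Aseq (m rf : nat -> bool) (n : nat) : bool :=
  Abit m (unp1 n) (ldec (unp1 (unp2 n))) (unp2 (unp2 n) =? 1) (prefix rf (length (ldec (unp1 (unp2 n))))).

Lemma phi_stage1 m pg q rf : assoc_app pg q rf -> assoc_app (Oseq (ob1 m) pg) q (Aseq m rf).
Proof.
  intros Hr.
  apply (G2 _ q _ (fun n k => ob1 m (tot pg) n (prefix q k))).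
  - intros n k b. unfold Oseq, OG. destruct (qcode_dec n (prefix q k) b) as [E1 [E2 E3]].
    rewrite E1, E2, E3. pose proof (ob1_nn m pg n (prefix q k)).
    destruct (ob1 m (tot pg) n (prefix q k)) as [[v|]|]; congruence.
  - intros n. set (L := length (ldec (unp1 (unp2 n)))).
    destruct (ev_range (fun i k => pdet (tot pg) (stage (prefix q k)) i k = Some (Some (rf i))) L) as [k0 Hk0].
    { intros i _. apply pdet_ev; auto. }
    exists k0. unfold ob1. fold L. rewrite length_prefix.
    rewrite (rpre_ok _ L rf) by (intros; apply Hk0; auto). reflexivity.
  - intros n k v H. unfold ob1 in H. rewrite length_prefix in H.
    destruct (rpre _ _) as [[rl|]|] eqn:E; try discriminate.
    apply rpre_sound with (rf := rf) in E. 2: apply pdet_stage_sound; auto.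
    inversion H; subst. reflexivity.
Qed.

Lemma phi_stage2 m u af rf s : assoc_app m u af -> assoc_app af rf s ->
  assoc_app (Aseq m rf) u s.
Proof.
  intros Ha Hs.
  apply (G2 _ u s (fun n k => pdet (fun j => pdet (tot m) (stage (prefix u k)) j k) (stage (prefix rf k)) n k)).
  - intros n k b. unfold Aseq. destruct (qcode_dec n (prefix u k) b) as [E1 [E2 E3]].
    rewrite E1, E2, E3. unfold Abit. rewrite length_prefix. reflexivity.
  - intros n. destruct (firept_ex af rf s n Hs) as [kf [Hf _]].
    destruct (ev_queries (fun j k => pdet (tot m) (stage (prefix u k)) j k = Some (Some (af j))) n rf kf)
      as [k0 Hk0].
    { intros j. apply pdet_ev; auto. }
    exists (max k0 (S kf)).
    apply (pdet_complete _ _ af rf s n _ kf Hs Hf). lia. intros; apply stage_prefix; lia.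
    intros k' c Hk'. apply Hk0; auto. lia.
  - intros n k v H.
    eapply pdet_sound; [| |exact Hs|exact H]. apply pdet_stage_sound; auto. apply stage_sound.
Qed.

Import ListNotations.
Open Scope bool_scope.

Definition idn (M : nat) : bool :=
  (unp1 M <? llen (unp1 (unp2 M))) && Bool.eqb (lnth (unp1 (unp2 M)) (unp1 M) =? 1) (unp2 (unp2 M) =? 1).

Lemma idn_app q : assoc_app idn q q.
Proof.
  assert (E : forall n k c, idn (qcode n (prefix q k) c) = (n <? k) && Bool.eqb (q n) c).
  { intros n k c. unfold idn, qcode. rewrite !unp1_cpair, !unp2_cpair, !unp1_cpair, llen_lcode, length_prefix.
    destruct (Nat.ltb_spec n k); simpl; auto.
    rewrite lnth_lcode by (rewrite length_prefix; auto).
    unfold prefix. rewrite (nth_indep (map q (seq 0 k)) false (q 0)) by (rewrite length_map, length_seq; auto).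
    rewrite map_nth, seq_nth by auto. simpl. destruct (q n), c; reflexivity. }
  intros n. exists (S n). split; [|split].
  - unfold fires. rewrite !E. rewrite (proj2 (Nat.ltb_lt n (S n))) by lia. simpl. destruct (q n); reflexivity.
  - intros k' Hk'. unfold fires. rewrite !E. rewrite (proj2 (Nat.ltb_ge n k')) by lia. reflexivity.
  - rewrite E. rewrite (proj2 (Nat.ltb_lt n (S n))) by lia. simpl. destruct (q n); reflexivity.
Qed.

Lemma idn_real : realizes Sier Sier idn (fun b => b).
Proof. intros q x Hq. exists q. split; auto. apply idn_app. Qed.

Definition idU : cont Sier Sier := exist _ (fun b => b) (ex_intro _ idn idn_real).

Lemma cont_eq (X Y : RepSpace) (f1 f2 : cont X Y) : (forall x, proj1_sig f1 x = proj1_sig f2 x) -> f1 = f2.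
Proof.
  destruct f1 as [f1 c1], f2 as [f2 c2]; simpl. intros H.
  assert (f1 = f2) by (apply functional_extensionality; auto). subst. f_equal. apply proof_irrelevance.
Qed.

Import ListNotations.

Definition enc_r (x : res) : nat :=
  match x with None => 0 | Some None => 1 | Some (Some b) => 2 + b2n b end.
Definition enc_l (x : option (option (list bool))) : nat :=
  match x with None => 0 | Some None => 1 | Some (Some l) => 2 + lcode l end.

Definition case3 (x a b : nat) (f : nat -> nat) : nat :=
  match x with 0 => a | 1 => b | S (S y) => f y end.

Lemma skipn_skipn' {A} x y (l : list A) : skipn x (skipn y l) = skipn (x + y) l.
Proof. apply skipn_skipn. Qed.

Ltac ext_ok := intros ? ?; rewrite ?skipn_skipn', ?nth_skipn; reflexivity.

Lemma R_case3 n X A B (F : list nat -> nat -> nat) : R n X -> R n A -> R n B ->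
  R (S n) (fun w => F (skipn 1 w) (nth 0 w 0)) ->
  R n (fun v => case3 (X v) (A v) (B v) (F v)).
Proof.
  intros HX HA HB HF.
  eapply R_ext. apply (R_ifzf n X A (fun v => ifz (pred (X v)) (B v) (F v (X v - 2)))); auto.
  apply R_ifzf; auto. apply (R_c1 n pred); auto. apply R_pred.
  - pose proof (R_cons_env 0 n _ (fun v => X v - 2) HF) as H. simpl in H. apply H.
    apply R_subf; auto. apply R_const.
  - intros v _. unfold case3, ifz. destruct (X v) as [|[|y]]; simpl; auto.
    f_equal. lia.
Qed.

Definition RF n (F : list nat -> nat -> res) := R (S n) (fun w => enc_r (F (skipn 1 w) (nth 0 w 0))).


Lemma RF_lift k n F : RF n F -> RF (k + n) (fun w => F (skipn k w)).
Proof.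
  intros H. unfold RF in *.
  pose proof (R_cons_env (S k) n _ (fun w => nth 0 w 0) H) as H2.
  eapply R_ext. apply H2. apply R_proj; lia.
  intros w Hw. destruct w as [|x w]; simpl in Hw; [lia|]. simpl. reflexivity.
Qed.

Lemma RF_at n F G : RF n F -> R n G -> R n (fun v => enc_r (F v (G v))).
Proof.
  intros HF HG. pose proof (R_cons_env 0 n _ G HF) as H. simpl in H. exact (H HG).
Qed.

Definition rst (rv : nat -> nat) (k j acc : nat) : nat :=
  case3 acc 0 1 (fun lc => case3 (rv (k - S j)) 0 1 (fun b => 2 + S (cpair b lc))).

Lemma rpb_enc r k j : enc_l (rpb r k j) = nrec 2 (fun j acc => rst (fun i => enc_r (r i)) k j acc) j.
Proof.
  induction j; simpl. reflexivity. rewrite <- IHj. unfold rst.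
  destruct (rpb r k j) as [[l|]|]; simpl; auto.
  destruct (r (k - S j)) as [[b|]|]; simpl; auto.
Qed.

Lemma R_rpre n r k : RF n r -> R n k -> R n (fun v => enc_l (rpre (r v) (k v))).
Proof.
  intros Hr Hk. unfold rpre.
  eapply R_ext. 2:{ intros v _. symmetry. apply rpb_enc. }
  apply (R_nrecf n k (fun _ => 2) (fun j acc v => rst (fun i => enc_r (r v i)) (k v) j acc)); auto.
  apply R_const. unfold rst.
  apply (R_case3 (2 + n) (fun w => nth 1 w 0) (fun _ => 0) (fun _ => 1)
    (fun w lc => case3 (enc_r (r (skipn 2 w) (k (skipn 2 w) - S (nth 0 w 0)))) 0 1 (fun b => 2 + S (cpair b lc)))).
  Rp 1. apply R_const. apply R_const.
  eapply R_ext; [apply (R_case3 (3 + n) (fun w => enc_r (r (skipn 3 w) (k (skipn 3 w) - S (nth 1 w 0)))) (fun _ => 0) (fun _ => 1)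
    (fun w b => 2 + S (cpair b (nth 0 w 0))))|ext_ok].
  - apply (RF_at (3 + n) (fun w => r (skipn 3 w))). apply RF_lift; auto.
    apply R_subf. apply (R_lift 3 n k Hk). apply R_Sf. Rp 1.
  - apply R_const. - apply R_const.
  - apply R_addf. apply R_const. apply R_Sf. apply R_cpair. Rp 0. Rp 1.
Qed.

Definition pst (av : nat -> nat) (n pc acc : nat) : nat :=
  case3 pc 0 1 (fun lc =>
    case3 (av (cpair n (cpair lc 1))) 0 1 (fun x1 =>
    case3 (av (cpair n (cpair lc 0))) 0 1 (fun x2 =>
      if x1 + x2 =? 0 then acc else 2 + x1))).

Lemma pdb_enc a r n K j : enc_r (pdb a r n K j) =
  nrec 1 (fun j acc => pst (fun i => enc_r (a i)) n (enc_l (rpre r (K - S j))) acc) j.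
Proof.
  induction j; simpl. reflexivity. rewrite <- IHj. unfold pst.
  destruct (rpre r (K - S j)) as [[l|]|]; simpl; auto.
  unfold qcode. destruct (a (cpair n (cpair (lcode l) 1))) as [[x1|]|]; simpl; auto.
  destruct (a (cpair n (cpair (lcode l) 0))) as [[x2|]|]; simpl; auto.
  destruct x1, x2; simpl; auto.
Qed.

Lemma R_pdet n a r N K : RF n a -> RF n r -> R n N -> R n K ->
  R n (fun v => enc_r (pdet (a v) (r v) (N v) (K v))).
Proof.
  intros Ha Hr HN HK. unfold pdet.
  eapply R_ext. 2:{ intros v _. symmetry. apply pdb_enc. }
  apply (R_nrecf n K (fun _ => 1)
    (fun j acc v => pst (fun i => enc_r (a v i)) (N v) (enc_l (rpre (r v) (K v - S j))) acc)); auto.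
  apply R_const. unfold pst.
  apply (R_case3 (2 + n) (fun w => enc_l (rpre (r (skipn 2 w)) (K (skipn 2 w) - S (nth 0 w 0)))) (fun _ => 0) (fun _ => 1)
    (fun w lc => case3 (enc_r (a (skipn 2 w) (cpair (N (skipn 2 w)) (cpair lc 1)))) 0 1 (fun x1 =>
      case3 (enc_r (a (skipn 2 w) (cpair (N (skipn 2 w)) (cpair lc 0)))) 0 1 (fun x2 =>
        if x1 + x2 =? 0 then nth 1 w 0 else 2 + x1)))).
  - apply (R_rpre (2 + n) (fun w => r (skipn 2 w))). apply RF_lift; auto.
    apply R_subf. apply (R_lift 2 n K HK). apply R_Sf. Rp 0.
  - apply R_const. - apply R_const.
  - eapply R_ext; [apply (R_case3 (3 + n) (fun w => enc_r (a (skipn 3 w) (cpair (N (skipn 3 w)) (cpair (nth 0 w 0) 1))))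
      (fun _ => 0) (fun _ => 1)
      (fun w x1 => case3 (enc_r (a (skipn 3 w) (cpair (N (skipn 3 w)) (cpair (nth 0 w 0) 0)))) 0 1 (fun x2 =>
        if x1 + x2 =? 0 then nth 2 w 0 else 2 + x1)))|ext_ok].
    + apply (RF_at (3 + n) (fun w => a (skipn 3 w))). apply RF_lift; auto.
      apply R_cpair. apply (R_lift 3 n N HN). apply R_cpair. Rp 0. apply R_const.
    + apply R_const. + apply R_const.
    + eapply R_ext; [apply (R_case3 (4 + n) (fun w => enc_r (a (skipn 4 w) (cpair (N (skipn 4 w)) (cpair (nth 1 w 0) 0))))
        (fun _ => 0) (fun _ => 1)
        (fun w x2 => if nth 0 w 0 + x2 =? 0 then nth 3 w 0 else 2 + nth 0 w 0))|ext_ok].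
      * apply (RF_at (4 + n) (fun w => a (skipn 4 w))). apply RF_lift; auto.
        apply R_cpair. apply (R_lift 4 n N HN). apply R_cpair. Rp 1. apply R_const.
      * apply R_const. * apply R_const.
      * apply R_ifb. apply R_eqb. apply R_addf; [Rp 1|Rp 0]. apply R_const.
        Rp 4. apply R_addf. apply R_const. Rp 1.
Qed.

Import ListNotations.


Lemma nth_error_ldec c i : nth_error (ldec c) i = if i <? llen c then Some (lnth c i =? 1) else None.
Proof.
  destruct (Nat.ltb_spec i (llen c)).
  - rewrite (nth_error_nth' _ false) by (rewrite length_ldec; auto). rewrite nth_ldec; auto.
  - apply nth_error_None. rewrite length_ldec. auto.
Qed.

Lemma R_beqb n c d : R n (fun v => b2n (c v)) -> R n (fun v => b2n (d v)) ->
  R n (fun v => b2n (Bool.eqb (c v) (d v))).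
Proof.
  intros. eapply R_ext. apply (R_eqb n _ _ H H0). intros v _; cbv beta; destruct (c v), (d v); reflexivity.
Qed.

Lemma R_b1 n f : R n f -> R n (fun v => b2n (f v =? 1)).
Proof. intros. apply R_eqb; auto. apply R_const. Qed.

Lemma RF_stage n c : R n c -> RF n (fun v => stage (ldec (c v))).
Proof.
  intros Hc. unfold RF.
  eapply R_ext. apply (R_ifb (S n) (fun w => nth 0 w 0 <? llen (c (skipn 1 w)))
    (fun w => 2 + b2n (lnth (c (skipn 1 w)) (nth 0 w 0) =? 1)) (fun _ => 1)).
  - apply R_ltb. Rp 0. apply R_llen. apply (R_lift 1 n c Hc).
  - apply R_addf. apply R_const. apply R_b1. apply R_lnth. apply (R_lift 1 n c Hc). Rp 0.
  - apply R_const.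
  - intros w _. unfold stage. rewrite nth_error_ldec. destruct (_ <? _); reflexivity.
Qed.

Lemma RF_dpre n c : R n c -> RF n (fun v => dpre (ldec (c v))).
Proof.
  intros Hc. unfold RF.
  eapply R_ext. apply (R_ifb (S n) (fun w => nth 0 w 0 <? llen (c (skipn 1 w)))
    (fun w => 2 + b2n (lnth (c (skipn 1 w)) (nth 0 w 0) =? 1)) (fun _ => 0)).
  - apply R_ltb. Rp 0. apply R_llen. apply (R_lift 1 n c Hc).
  - apply R_addf. apply R_const. apply R_b1. apply R_lnth. apply (R_lift 1 n c Hc). Rp 0.
  - apply R_const.
  - intros w _. unfold dpre. rewrite nth_error_ldec. destruct (_ <? _); reflexivity.
Qed.

Lemma RF_tot n (m : nat -> bool) : R 1 (fun w => b2n (m (nth 0 w 0))) -> RF n (fun _ => tot m).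
Proof.
  intros Hm. unfold RF.
  assert (H1 : R (S n) (fun w => b2n (m (nth 0 w 0)))).
  { apply (R_c1 (S n) (fun x => b2n (m x)) (fun w => nth 0 w 0)). exact Hm. apply R_proj. lia. }
  assert (H2 : R (S n) (fun w => 2 + b2n (m (nth 0 w 0)))).
  { apply (R_addf (S n) (fun _ => 2) (fun w => b2n (m (nth 0 w 0)))). apply R_const. exact H1. }
  exact H2.
Qed.

Lemma RF_pdet n a r K : RF n a -> RF n r -> R n K -> RF n (fun v j => pdet (a v) (r v) j (K v)).
Proof.
  intros Ha Hr HK. unfold RF.
  apply (R_pdet (S n) (fun w => a (skipn 1 w)) (fun w => r (skipn 1 w)) (fun w => nth 0 w 0) (fun w => K (skipn 1 w))).
  apply (RF_lift 1); auto. apply (RF_lift 1); auto. Rp 0. apply (R_lift 1 n K HK).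
Qed.

Lemma R_ob2 (idn : nat -> bool) : R 1 (fun w => b2n (idn (nth 0 w 0))) ->
  R 3 (fun w => enc_r (ob2 idn (dpre (ldec (nth 0 w 0))) (nth 1 w 0) (ldec (nth 2 w 0)))).
Proof.
  intros Hi. unfold ob2.
  eapply R_ext. apply (R_pdet 3 (fun w j => pdet (dpre (ldec (nth 0 w 0))) (stage (ldec (nth 2 w 0))) j (llen (nth 2 w 0)))
    (fun _ => tot idn) (fun w => nth 1 w 0) (fun w => llen (nth 2 w 0))).
  - apply RF_pdet. apply RF_dpre. Rp 0. apply RF_stage. Rp 2. apply R_llen. Rp 2.
  - apply RF_tot; auto.
  - Rp 1. - apply R_llen. Rp 2.
  - intros w _. rewrite length_ldec. reflexivity.
Qed.

Lemma R_ob1 (m : nat -> bool) : R 1 (fun w => b2n (m (nth 0 w 0))) ->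
  R 3 (fun w => enc_r (ob1 m (dpre (ldec (nth 0 w 0))) (nth 1 w 0) (ldec (nth 2 w 0)))).
Proof.
  intros Hm.
  set (L := fun w : list nat => llen (unp1 (unp2 (nth 1 w 0)))).
  assert (HL : R 3 L) by (apply R_llen; apply R_unp1; apply R_unp2; Rp 1).
  eapply R_ext. apply (R_case3 3
    (fun w => enc_l (rpre (fun i => pdet (dpre (ldec (nth 0 w 0))) (stage (ldec (nth 2 w 0))) i (llen (nth 2 w 0))) (L w)))
    (fun _ => 0) (fun _ => 1)
    (fun w lc => 2 + case3 (enc_r (pdet (fun j => pdet (tot m) (stage (ldec (unp1 (unp2 (nth 1 w 0))))) j (L w))
                            (stage (ldec lc)) (unp1 (nth 1 w 0)) (L w))) 0 0
                   (fun x => b2n (x =? b2n (unp2 (unp2 (nth 1 w 0)) =? 1))))).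
  - apply (R_rpre 3 (fun w i => pdet (dpre (ldec (nth 0 w 0))) (stage (ldec (nth 2 w 0))) i (llen (nth 2 w 0)))).
    apply RF_pdet. apply RF_dpre. Rp 0. apply RF_stage. Rp 2. apply R_llen. Rp 2. exact HL.
  - apply R_const. - apply R_const.
  - apply R_addf. apply R_const.
    assert (HL' : R 4 (fun w => L (skipn 1 w))) by apply (R_lift 1 3 L HL).
    eapply R_ext; [apply (R_case3 4
      (fun w => enc_r (pdet (fun j => pdet (tot m) (stage (ldec (unp1 (unp2 (nth 2 w 0))))) j (L (skipn 1 w)))
                            (stage (ldec (nth 0 w 0))) (unp1 (nth 2 w 0)) (L (skipn 1 w))))
      (fun _ => 0) (fun _ => 0) (fun w x => b2n (x =? b2n (unp2 (unp2 (nth 2 w 0)) =? 1))))|].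
    + apply R_pdet. apply RF_pdet. apply RF_tot; auto. apply RF_stage. apply R_unp1; apply R_unp2; Rp 2.
      exact HL'. apply RF_stage. Rp 0. apply R_unp1. Rp 2. exact HL'.
    + apply R_const. + apply R_const.
    + apply R_eqb. Rp 0. apply R_b1. apply R_unp2. apply R_unp2. Rp 3.
    + intros w _. destruct w as [|x w]; [reflexivity|]. simpl. reflexivity.
  - intros w _. unfold ob1. rewrite !length_ldec. unfold L.
    destruct (rpre _ _) as [[rl|]|]; simpl; auto.
    rewrite ldec_lcode. unfold Abit. rewrite length_ldec.
    destruct (pdet _ _ _ _) as [[v|]|]; simpl; auto.
    destruct v, (unp2 (unp2 (nth 1 w 0)) =? 1); reflexivity.
Qed.

Lemma comp_Pseq (ob : obT) : R 3 (fun w => enc_r (ob (dpre (ldec (nth 0 w 0))) (nth 1 w 0) (ldec (nth 2 w 0)))) ->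
  computable_seq (Pseq ob).
Proof.
  intros Hob.
  assert (H : R 1 (fun w => b2n (Pseq ob (nth 0 w 0)))).
  { set (M := fun w : list nat => nth 0 w 0).
    assert (HM : R 1 M) by (apply R_proj; lia).
    set (bm := fun w => b2n (unp2 (unp2 (M w)) =? 1)).
    set (bq := fun w => b2n (unp2 (unp2 (unp1 (M w))) =? 1)).
    assert (Hbm : R 1 bm) by (apply R_b1; apply R_unp2; apply R_unp2; auto).
    assert (Hbq : R 1 bq) by (apply R_b1; apply R_unp2; apply R_unp2; apply R_unp1; auto).
    assert (He : R 1 (fun w => enc_r (ob (dpre (ldec (unp1 (unp2 (M w))))) (unp1 (unp1 (M w))) (ldec (unp1 (unp2 (unp1 (M w)))))))).
    { apply (R_c3 1 (fun a b c => enc_r (ob (dpre (ldec a)) b (ldec c)))). exact Hob.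
      apply R_unp1, R_unp2; auto. apply R_unp1, R_unp1; auto. apply R_unp1, R_unp2, R_unp1; auto. }
    eapply R_ext. apply (R_case3 1 _ (fun _ => 0) (fun w => b2n (0 =? bm w))
      (fun w x => b2n ((b2n (x =? bq w)) =? bm w)) He).
    apply R_const. apply R_eqb. apply R_const. auto.
    apply R_eqb. apply R_eqb. apply R_proj; lia. apply (R_lift 1 1 bq Hbq). apply (R_lift 1 1 bm Hbm).
    intros w _. unfold Pseq, OG. unfold bm, bq, M.
    destruct (ob _ _ _) as [[v|]|]; simpl; auto.
    - destruct v, (unp2 (unp2 (unp1 (nth 0 w 0))) =? 1), (unp2 (unp2 (nth 0 w 0)) =? 1); reflexivity.
    - destruct (unp2 (unp2 (nth 0 w 0)) =? 1); reflexivity. }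
  destruct H as [e He]. exists e. intros n. specialize (He [n] eq_refl). simpl in He.
  destruct (Pseq ob n); exact He.
Qed.

Import ListNotations.

Lemma cs_R m : computable_seq m -> R 1 (fun w => b2n (m (nth 0 w 0))).
Proof.
  intros [e He]. exists e. intros [|x [|]] H; simpl in H; try discriminate. simpl. apply He.
Qed.

Lemma comp_P1 m : computable_seq m -> computable_seq (Pseq (ob1 m)).
Proof. intros H. apply comp_Pseq. apply R_ob1. apply cs_R; auto. Qed.

Lemma R_idn : R 1 (fun w => b2n (idn (nth 0 w 0))).
Proof.
  unfold idn. set (M := fun w : list nat => nth 0 w 0).
  assert (HM : R 1 M) by (apply R_proj; lia).
  apply (R_andb 1 (fun w => unp1 (M w) <? llen (unp1 (unp2 (M w))))
     (fun w => Bool.eqb (lnth (unp1 (unp2 (M w))) (unp1 (M w)) =? 1) (unp2 (unp2 (M w)) =? 1))).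
  - apply R_ltb. apply R_unp1; auto. apply R_llen, R_unp1, R_unp2; auto.
  - apply R_beqb; apply R_b1. apply R_lnth. apply R_unp1, R_unp2; auto. apply R_unp1; auto.
    apply R_unp2, R_unp2; auto.
Qed.

Lemma comp_P2 : computable_seq (Pseq (ob2 idn)).
Proof. apply comp_Pseq. apply R_ob2. apply R_idn. Qed.


Lemma exist_eq {A} (P : A -> Prop) a b pa pb : a = b -> exist P a pa = exist P b pb.
Proof. intros; subst; f_equal; apply proof_irrelevance. Qed.

Section Main.
Variable d : CompEndofunctor.
Variable mm : nat -> bool.
Hypothesis Hmm : realizes (Cspace Sier Sier) (Cspace (dobj d Sier) (dobj d Sier)) mm (@dmap d Sier Sier).

Lemma kap_real (rf : nat -> bool) (y : dobj d Sier) : rep (dobj d Sier) rf y ->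
  realizes (Ospace Sier) (dobj d Sier) (Aseq mm rf) (fun U => proj1_sig (dmap d U) y).
Proof.
  intros Hy u U Hu. destruct (Hmm u U Hu) as [af [Haf Hr]].
  simpl in Hr. destruct (Hr rf y Hy) as [s [Hs Hsr]].
  exists s. split; auto. eapply phi_stage2; eauto.
Qed.

Lemma kap_cont (y : dobj d Sier) : continuous (Ospace Sier) (dobj d Sier) (fun U => proj1_sig (dmap d U) y).
Proof. destruct (rep_surj _ y) as [rf Hrf]. exists (Aseq mm rf). apply kap_real; auto. Qed.

Definition kapc (y : dobj d Sier) : cont (Ospace Sier) (dobj d Sier) := exist _ _ (kap_cont y).
Definition kap (y : dobj d Sier) : kappa_obj d Sier :=
  exist _ (kapc y) (ex_intro _ y (fun U => eq_refl)).

Variable X : RepSpace.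

Lemma Phi_real (g : cont X (dobj d Sier)) pg : realizes X (dobj d Sier) pg (proj1_sig g) ->
  realizes X (kappa_obj d Sier) (Oseq (ob1 mm) pg) (fun x => kap (proj1_sig g x)).
Proof.
  intros Hg q x Hq. destruct (Hg q x Hq) as [rf [Hrf Hy]]. exists (Aseq mm rf). split.
  apply phi_stage1; auto. simpl. apply kap_real; auto.
Qed.

Lemma Phi_cont (g : cont X (dobj d Sier)) : continuous X (kappa_obj d Sier) (fun x => kap (proj1_sig g x)).
Proof. destruct (Cspace_surj g) as [pg Hpg]. exists (Oseq (ob1 mm) pg). apply Phi_real; auto. Qed.

Definition PhiF (g : Od d X) : Cspace X (kappa_obj d Sier) := exist _ _ (Phi_cont g).

Lemma Psi_real (h : cont X (kappa_obj d Sier)) ph : realizes X (kappa_obj d Sier) ph (proj1_sig h) ->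
  realizes X (dobj d Sier) (Oseq (ob2 idn) ph) (fun x => proj1_sig (proj1_sig (proj1_sig h x)) idU).
Proof.
  intros Hh q x Hq. destruct (Hh q x Hq) as [wf [Hw Hwr]]. simpl in Hwr.
  destruct (Hwr idn idU idn_real) as [s [Hs Hsr]].
  exists s; split; auto. eapply psi_stage; eauto.
Qed.

Lemma Psi_cont (h : cont X (kappa_obj d Sier)) : continuous X (dobj d Sier) (fun x => proj1_sig (proj1_sig (proj1_sig h x)) idU).
Proof. destruct (Cspace_surj h) as [ph Hph]. exists (Oseq (ob2 idn) ph). apply Psi_real; auto. Qed.

Definition PsiF (h : Cspace X (kappa_obj d Sier)) : Od d X := exist _ _ (Psi_cont h).

Lemma kap_inv (z : kappa_obj d Sier) : kap (proj1_sig (proj1_sig z) idU) = z.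
Proof.
  destruct z as [phi [y Hy]]. unfold kap. apply exist_eq.
  apply cont_eq. intros U. simpl. etransitivity; [|symmetry; apply Hy].
  f_equal. etransitivity; [apply Hy|]. apply (dmap_id d idU). reflexivity.
Qed.
End Main.

Theorem corollary9 (d : CompEndofunctor) (X : RepSpace) :
  exists (Phi : Od d X -> Cspace X (kappa_obj d Sier))
         (Psi : Cspace X (kappa_obj d Sier) -> Od d X),
    (forall (g : Od d X) (x : X) (U : Ospace Sier),
        proj1_sig (proj1_sig (proj1_sig (Phi g) x)) U
        = proj1_sig (dmap d U) (proj1_sig g x)) /\
    computable (Od d X) (Cspace X (kappa_obj d Sier)) Phi /\
    computable (Cspace X (kappa_obj d Sier)) (Od d X) Psi /\
    (forall g, Psi (Phi g) = g) /\ (forall h, Phi (Psi h) = h).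
Proof.
  destruct (dmap_computable d Sier Sier) as [mm [Hc Hmm]].
  exists (PhiF d mm Hmm X), (PsiF d X). split; [|split; [|split; [|split]]].
  - intros. reflexivity.
  - exists (Pseq (ob1 mm)). split. apply comp_P1; auto.
    intros pg g Hg. exists (Oseq (ob1 mm) pg). split.
    apply G1. apply ob1_mono. apply ob1_cont. apply ob1_nn.
    simpl. apply Phi_real. exact Hg.
  - exists (Pseq (ob2 idn)). split. apply comp_P2.
    intros ph h Hh. exists (Oseq (ob2 idn) ph). split.
    apply G1. apply ob2_mono. apply ob2_cont. apply ob2_nn.
    simpl. apply Psi_real. exact Hh.
  - intros g. apply cont_eq. intros x. simpl. apply dmap_id. reflexivity.
  - intros h. apply cont_eq. intros x. simpl. apply kap_inv.
Qed.
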